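(* Let $M=2Z+1$ with $Z\ge 1$ an integer, and let $\gamma_1,\dots,\gamma_{M-1}$ be nonzero real numbers and $J_1,\dots,J_{M-1}$ real numbers. Consider $$H_{\gamma J}=\sum_{m=1}^{M-1}\Big(J_m c_{m+1}^\dagger c_m\sigma_{m+1}^+ + \text{h.c.}\Big) - \sum_{m=1}^{M-1}\Big(\gamma_m c_{m+1}^\dagger c_m + \text{h.c.}\Big)$$ on the open chain of $M$ sites. Then the subspace of states with exactly one fermion and with spin on site $1$ equal to $|\uparrow\rangle$ contains $2^{M-1}$ linearly independent states $|\Psi\rangle$ with $H_{\gamma J}|\Psi\rangle=0$.
   Context: Each site $m=1,\dots,M$ carries one spinless fermion mode ($c_m,c_m^\dagger$, canonical anticommutation relations) and one spin-$1/2$ with Pauli matrices $\sigma_m^{x,y,z}$; $\sigma_m^{\pm}=\sigma_m^x\pm i\sigma_m^y$. The Hilbert space is the tensor product of the fermionic Fock space and the $M$ spin spaces; $H_{\gamma J}$ conserves the fermion number $\sum_m c_m^\dagger c_m$ and does not act on the spin at site $1$. *)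

(* Defs.v *)
From HB Require Import structures.
From mathcomp Require Import all_boot all_order all_algebra.
From mathcomp Require Import reals complex.
Set Implicit Arguments. Unset Strict Implicit. Unset Printing Implicit Defensive.
Import Order.TTheory GRing.Theory Num.Theory.
Local Open Scope ring_scope.

Section Chain.
Variable R : realType.
Variable M : nat.   (* number of sites; sites 1..M are 'I_M = {0,..,M-1} *)

(* Basis of the full Hilbert space (fermionic Fock space (x) M spins-1/2):
   a basis state is a pair (n, s) of occupation numbers n m in {0,1}
   (true = occupied) and spin configuration s m (true = up, false = down). *)
Definition basis : finType :=
  ({ffun 'I_M -> bool} * {ffun 'I_M -> bool})%type.

Definition state := basis -> R[i].
Definition op := basis -> basis -> R[i].

Definition op_apply (A : op) (psi : state) : state :=
  fun x => \sum_(y : basis) A x y * psi y.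
Definition op_mul (A B : op) : op :=
  fun x y => \sum_(z : basis) A x z * B z y.
Definition op_add (A B : op) : op := fun x y => A x y + B x y.
Definition op_opp (A : op) : op := fun x y => - A x y.
Definition op_scale (a : R[i]) (A : op) : op := fun x y => a * A x y.
Definition op_zero : op := fun _ _ => 0.
Definition op_adj (A : op) : op := fun x y => conjc (A y x).
Definition op_sum (I : finType) (F : I -> op) : op :=
  fun x y => \sum_(i : I) F i x y.

Definition set_occ (n : {ffun 'I_M -> bool}) (m : 'I_M) (b : bool) :=
  [ffun j => if j == m then b else n j].

Definition jw_sign (n : {ffun 'I_M -> bool}) (m : 'I_M) : R[i] :=
  (-1) ^+ #|[pred j : 'I_M | (j < m)%N && n j]|.

(* fermionic annihilation / creation operators (satisfy the CAR) *)
Definition c_ann (m : 'I_M) : op := fun x y =>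
  if [&& y.1 m, x.1 == set_occ y.1 m false & x.2 == y.2]
  then jw_sign y.1 m else 0.
Definition c_cre (m : 'I_M) : op := fun x y =>
  if [&& ~~ y.1 m, x.1 == set_occ y.1 m true & x.2 == y.2]
  then jw_sign y.1 m else 0.

(* a single-site 2x2 spin matrix P (P u v = <u|P|v>, true = up) acting on
   the spin at site k (identity on everything else) *)
Definition on_spin (k : 'I_M) (P : bool -> bool -> R[i]) : op := fun x y =>
  if (x.1 == y.1) && [forall j : 'I_M, (j != k) ==> (x.2 j == y.2 j)]
  then P (x.2 k) (y.2 k) else 0.

Definition pauli_x (u v : bool) : R[i] := if u != v then 1 else 0.
Definition pauli_y (u v : bool) : R[i] :=
  match u, v with
  | true, false => - Complex 0 1
  | false, true => Complex 0 1
  | _, _ => 0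
  end.
Definition pauli_z (u v : bool) : R[i] :=
  if u == v then (if u then 1 else -1) else 0.

Definition sigma_x (k : 'I_M) : op := on_spin k pauli_x.
Definition sigma_y (k : 'I_M) : op := on_spin k pauli_y.
Definition sigma_z (k : 'I_M) : op := on_spin k pauli_z.
Definition sigma_plus (k : 'I_M) : op :=
  op_add (sigma_x k) (op_scale (Complex 0 1) (sigma_y k)).
Definition sigma_minus (k : 'I_M) : op :=
  op_add (sigma_x k) (op_scale (- Complex 0 1) (sigma_y k)).

Definition num_fermions (x : basis) : nat := #|[pred j : 'I_M | x.1 j]|.

End Chain.

(* The chain with M = N.+1 sites; bond m (0 <= m < N) links sites
   m and m+1 (0-indexed). *)
Definition site_l (N : nat) (m : 'I_N) : 'I_N.+1 := widen_ord (leqnSn N) m.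
Definition site_r (N : nat) (m : 'I_N) : 'I_N.+1 := lift ord0 m.

Definition H_gammaJ (R : realType) (N : nat) (gamma J : 'I_N -> R)
  : op R N.+1 :=
  let hopJ m := op_scale (Complex (J m) 0)
      (op_mul (op_mul (c_cre R (site_r m)) (c_ann R (site_l m)))
              (sigma_plus R (site_r m))) in
  let hopG m := op_scale (Complex (gamma m) 0)
      (op_mul (c_cre R (site_r m)) (c_ann R (site_l m))) in
  op_add (op_sum (fun m => op_add (hopJ m) (op_adj (hopJ m))))
         (op_opp (op_sum (fun m => op_add (hopG m) (op_adj (hopG m))))).

(* the subspace: exactly one fermion, spin at site 1 (index 0) up *)
Definition in_sector (R : realType) (M : nat) (psi : state R M.+1) : Prop :=
  forall x : basis M.+1,
    ~~ ((num_fermions x == 1%N) && (x.2 ord0)) -> psi x = 0.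

Definition lin_indep (R : realType) (M : nat) (I : finType)
  (psi : I -> state R M) : Prop :=
  forall a : I -> R[i],
    (forall x, \sum_(i : I) a i * psi i x = 0) -> forall i, a i = 0.

(* Main.v *)
Require Import Defs.
From HB Require Import structures.
From mathcomp Require Import all_boot all_order all_algebra.
From mathcomp Require Import reals complex.
From mathcomp Require Import ring.
From Stdlib Require Import FunctionalExtensionality.
Import Order.TTheory GRing.Theory Num.Theory.
Local Open Scope ring_scope.

Module Aux.
Set Implicit Arguments. Unset Strict Implicit. Unset Printing Implicit Defensive.

Section Gen.
Variable R : realType.
Variable M : nat.
Implicit Types (A B : op R M) (phi : state R M) (x y : basis M).

Lemma apply_add A B phi x :
  op_apply (op_add A B) phi x = op_apply A phi x + op_apply B phi x.
Proof. by rewrite /op_apply -big_split; apply: eq_bigr => y _; rewrite mulrDl. Qed.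

Lemma apply_scale a A phi x :
  op_apply (op_scale a A) phi x = a * op_apply A phi x.
Proof. by rewrite /op_apply mulr_sumr; apply: eq_bigr => y _; rewrite mulrA. Qed.

Lemma apply_opp A phi x :
  op_apply (op_opp A) phi x = - op_apply A phi x.
Proof. by rewrite /op_apply -sumrN; apply: eq_bigr => y _; rewrite mulNr. Qed.

Lemma apply_sum (I : finType) (F : I -> op R M) phi x :
  op_apply (op_sum F) phi x = \sum_i op_apply (F i) phi x.
Proof.
rewrite /op_apply /op_sum exchange_big; apply: eq_bigr => y _.
by rewrite mulr_suml.
Qed.

Lemma apply_mul A B phi x :
  op_apply (op_mul A B) phi x = op_apply A (op_apply B phi) x.
Proof.
rewrite /op_apply /op_mul.
under eq_bigr do rewrite mulr_suml.
rewrite exchange_big; apply: eq_bigr => z _.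
by rewrite mulr_sumr; apply: eq_bigr => y _; rewrite mulrA.
Qed.

Lemma adj_mul A B : op_adj (op_mul A B) = op_mul (op_adj B) (op_adj A).
Proof.
apply: functional_extensionality => x; apply: functional_extensionality => y.
rewrite /op_adj /op_mul rmorph_sum; apply: eq_bigr => z _.
by rewrite rmorphM mulrC.
Qed.

Lemma adj_scale a A : op_adj (op_scale a A) = op_scale (conjc a) (op_adj A).
Proof.
apply: functional_extensionality => x; apply: functional_extensionality => y.
by rewrite /op_adj /op_scale rmorphM.
Qed.

Lemma adj_add A B : op_adj (op_add A B) = op_add (op_adj A) (op_adj B).
Proof.
apply: functional_extensionality => x; apply: functional_extensionality => y.
by rewrite /op_adj /op_add rmorphD.
Qed.

Lemma sum_single (F : basis M -> R[i]) y0 c phi :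
  (forall y, F y = if y == y0 then c else 0) ->
  \sum_y F y * phi y = c * phi y0.
Proof.
move=> HF; rewrite (bigD1 y0) //= HF eqxx big1 ?addr0 // => y /negbTE Hy.
by rewrite HF Hy mul0r.
Qed.

Lemma conj_jw (n : {ffun 'I_M -> bool}) (m : 'I_M) : conjc (jw_sign R n m) = jw_sign R n m.
Proof. by rewrite /jw_sign rmorphXn rmorphN rmorph1. Qed.

Lemma jw_set (n : {ffun 'I_M -> bool}) (m : 'I_M) b : jw_sign R (set_occ n m b) m = jw_sign R n m.
Proof.
rewrite /jw_sign; congr (_ ^+ _); apply: eq_card => j; rewrite !inE /=.
rewrite /set_occ ffunE; case: eqP => [->|//]; by rewrite ltnn.
Qed.


Lemma set_occE (n : {ffun 'I_M -> bool}) m b j :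
  set_occ n m b j = if j == m then b else n j.
Proof. by rewrite /set_occ ffunE. Qed.

Lemma set_occ_id (n : {ffun 'I_M -> bool}) m b :
  (n == set_occ n m b) = (n m == b).
Proof.
apply/eqP/eqP => [->|H]; first by rewrite set_occE eqxx.
by apply/ffunP => j; rewrite set_occE; case: eqP => // ->.
Qed.

Lemma set_occ_ss (n : {ffun 'I_M -> bool}) m b c :
  set_occ (set_occ n m b) m c = set_occ n m c.
Proof. by apply/ffunP => j; rewrite !set_occE; case: eqP. Qed.

Lemma set_occ_key (x y : {ffun 'I_M -> bool}) m :
  (y m && (x == set_occ y m false)) = (~~ x m && (y == set_occ x m true)).
Proof.
apply/andP/andP => [[Hy /eqP ->]|[Hx /eqP ->]].
  by rewrite set_occE eqxx set_occ_ss set_occ_id Hy.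
by rewrite set_occE eqxx set_occ_ss set_occ_id (negbTE Hx).
Qed.

Lemma adj_cre (m : 'I_M) : op_adj (c_cre R m) = c_ann R m.
Proof.
apply: functional_extensionality => x; apply: functional_extensionality => y.
rewrite /op_adj /c_cre /c_ann !andbA set_occ_key (eq_sym y.2).
case: ifP => [/andP[/andP[_ /eqP ->] _]|_]; last by rewrite conjc0.
by rewrite conj_jw jw_set.
Qed.

Lemma adj_ann (m : 'I_M) : op_adj (c_ann R m) = c_cre R m.
Proof.
apply: functional_extensionality => x; apply: functional_extensionality => y.
rewrite /op_adj /c_cre /c_ann !andbA set_occ_key (eq_sym y.2).
case: ifP => [/andP[/andP[_ /eqP ->] _]|_]; last by rewrite conjc0.
by rewrite conj_jw jw_set.
Qed.

Lemma apply_ann (m : 'I_M) phi x :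
  op_apply (c_ann R m) phi x =
  if ~~ x.1 m then jw_sign R x.1 m * phi (set_occ x.1 m true, x.2) else 0.
Proof.
rewrite /op_apply (@sum_single _ (set_occ x.1 m true, x.2)
   (if ~~ x.1 m then jw_sign R x.1 m else 0)).
  by case: ifP => _; rewrite ?mul0r.
move=> [n t] /=; rewrite /c_ann /=.
rewrite andbA set_occ_key (eq_sym x.2) xpair_eqE -andbA.
case: (~~ x.1 m); rewrite /= ?if_same //.
by case: ifP => [/andP[/eqP -> _]|//]; rewrite jw_set.
Qed.

Lemma apply_cre (m : 'I_M) phi x :
  op_apply (c_cre R m) phi x =
  if x.1 m then jw_sign R x.1 m * phi (set_occ x.1 m false, x.2) else 0.
Proof.
rewrite /op_apply (@sum_single _ (set_occ x.1 m false, x.2)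
   (if x.1 m then jw_sign R x.1 m else 0)).
  by case: ifP => _; rewrite ?mul0r.
move=> [n t] /=; rewrite /c_cre /=.
rewrite andbA -set_occ_key (eq_sym x.2) xpair_eqE -andbA.
case: (x.1 m); rewrite /= ?if_same //.
by case: ifP => [/andP[/eqP -> _]|//]; rewrite jw_set.
Qed.


Lemma forall_set (s t : {ffun 'I_M -> bool}) k :
  [forall j, (j != k) ==> (s j == t j)] = (t == set_occ s k (t k)).
Proof.
apply/forallP/eqP => [H|->] .
  apply/ffunP => j; rewrite set_occE; case: eqP => [->//|/eqP Hj].
  by move/implyP: (H j) => /(_ Hj) /eqP.
by move=> j; apply/implyP => Hj; rewrite set_occE (negbTE Hj).
Qed.

Lemma apply_on_spin (k : 'I_M) P phi x :
  op_apply (on_spin k P) phi x =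
  P (x.2 k) true * phi (x.1, set_occ x.2 k true) +
  P (x.2 k) false * phi (x.1, set_occ x.2 k false).
Proof.
rewrite /op_apply.
rewrite -(@sum_single (fun y => if y == (x.1, set_occ x.2 k true) then P (x.2 k) true else 0) _ _ phi) //.
rewrite -(@sum_single (fun y => if y == (x.1, set_occ x.2 k false) then P (x.2 k) false else 0) _ _ phi) //.
rewrite -big_split /=; apply: eq_bigr => [[n t]] _ /=.
rewrite -mulrDl; congr (_ * _).
rewrite /on_spin /= forall_set !xpair_eqE (eq_sym n).
case Htk: (t k).
- have -> : (t == set_occ x.2 k false) = false.
    by apply/negbTE/eqP => Hf; move: Htk; rewrite Hf set_occE eqxx.
  by rewrite andbF addr0.
- have -> : (t == set_occ x.2 k true) = false.
    by apply/negbTE/eqP => Hf; move: Htk; rewrite Hf set_occE eqxx.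
  by rewrite andbF add0r.
Qed.

Lemma adj_on_spin (k : 'I_M) (P : bool -> bool -> R[i]) :
  op_adj (on_spin k P) = on_spin k (fun u v => conjc (P v u)).
Proof.
apply: functional_extensionality => x; apply: functional_extensionality => y.
rewrite /op_adj /on_spin (eq_sym y.1).
have -> : [forall j, (j != k) ==> (y.2 j == x.2 j)] =
          [forall j, (j != k) ==> (x.2 j == y.2 j)].
  by apply: eq_forallb => j; rewrite (eq_sym (y.2 j)).
by case: ifP; rewrite ?conjc0.
Qed.


Lemma conj_i : conjc ('i%C : R[i]) = - 'i%C.
Proof. by apply/eqP; rewrite eq_complex /= !oppr0 !eqxx. Qed.

Lemma conj_mi : conjc (- 'i%C : R[i]) = 'i%C.
Proof. by apply/eqP; rewrite eq_complex /= !oppr0 opprK !eqxx. Qed.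

Lemma ii : ('i%C : R[i]) * 'i%C = -1.
Proof. by rewrite -expr2 sqr_i. Qed.

Lemma px_herm : (fun u v => conjc (pauli_x R v u)) = pauli_x R.
Proof.
apply: functional_extensionality => u; apply: functional_extensionality => v.
by rewrite /pauli_x eq_sym; case: ifP; rewrite ?conjc0 ?conjc1.
Qed.

Lemma py_herm : (fun u v => conjc (pauli_y R v u)) = pauli_y R.
Proof.
apply: functional_extensionality => u; apply: functional_extensionality => v.
case: u; case: v; rewrite /pauli_y; cbv beta iota;
  by rewrite ?conjc0 ?conj_mi ?conj_i.
Qed.

Lemma ar_gen (i a b : R[i]) : i * i = -1 ->
  [/\ 0 * a + 1 * b + i * (0 * a + - i * b) = 2 * b,
      1 * a + 0 * b + i * (i * a + 0 * b) = 0,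
      0 * a + 1 * b + - i * (0 * a + - i * b) = 0 &
      1 * a + 0 * b + - i * (i * a + 0 * b) = 2 * a].
Proof.
move=> H; split; rewrite mulrDr !mulrA ?mulrN ?mulNr ?opprK H; ring.
Qed.

Lemma apply_splus (k : 'I_M) phi x :
  op_apply (sigma_plus R k) phi x =
  if x.2 k then 2 * phi (x.1, set_occ x.2 k false) else 0.
Proof.
rewrite /sigma_plus apply_add apply_scale /sigma_x /sigma_y !apply_on_spin.
have [H1 H2 _ _] := @ar_gen (Complex 0 1) (phi (x.1, set_occ x.2 k true))
                            (phi (x.1, set_occ x.2 k false)) ii.
by case: (x.2 k); rewrite /pauli_x /pauli_y /=.
Qed.

Lemma apply_adj_splus (k : 'I_M) phi x :
  op_apply (op_adj (sigma_plus R k)) phi x =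
  if x.2 k then 0 else 2 * phi (x.1, set_occ x.2 k true).
Proof.
rewrite /sigma_plus adj_add adj_scale /sigma_x /sigma_y !adj_on_spin.
rewrite px_herm py_herm conj_i.
rewrite apply_add apply_scale !apply_on_spin.
have [_ _ H3 H4] := @ar_gen (Complex 0 1) (phi (x.1, set_occ x.2 k true))
                            (phi (x.1, set_occ x.2 k false)) ii.
by case: (x.2 k); rewrite /pauli_x /pauli_y /=.
Qed.


Definition onehot (p : 'I_M) : {ffun 'I_M -> bool} := [ffun j => j == p].

Lemma onehotE p j : onehot p j = (j == p).
Proof. by rewrite ffunE. Qed.

Lemma onehot_inj : injective onehot.
Proof.
move=> p q /ffunP /(_ p); rewrite !onehotE eqxx => H.
by apply/eqP; rewrite -H.
Qed.

Definition supp (phi : state R M) :=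
  forall n s, (forall p, n != onehot p) -> phi (n, s) = 0.

Lemma jw_onehot a : jw_sign R (onehot a) a = 1.
Proof.
rewrite /jw_sign (_ : #|_| = 0)%N ?expr0 //; apply: eq_card0 => j.
rewrite !inE onehotE; apply/negbTE/andP => [[H1 /eqP H2]].
by rewrite H2 ltnn in H1.
Qed.

Lemma hop_eval (phi : state R M) (a b : 'I_M) x : supp phi ->
  op_apply (c_cre R a) (op_apply (c_ann R b) phi) x =
  if x.1 == onehot a then phi (onehot b, x.2) else 0.
Proof.
move=> Hs; rewrite apply_cre /=.
case: (x.1 =P onehot a) => [->|Hx].
  rewrite onehotE eqxx jw_onehot mul1r apply_ann /=.
  have Hz : set_occ (onehot a) a false = [ffun => false].
    by apply/ffunP => j; rewrite set_occE onehotE !ffunE; case: eqP.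
  rewrite Hz ffunE /=.
  have -> : set_occ [ffun => false] b true = onehot b.
    by apply/ffunP => j; rewrite set_occE onehotE !ffunE; case: eqP.
  rewrite /jw_sign (_ : #|_| = 0)%N ?expr0 ?mul1r //; apply: eq_card0 => j.
  by rewrite !inE ffunE andbF.
case Ha: (x.1 a) => //; rewrite apply_ann /=.
case Hb: (set_occ x.1 a false b) => /=; first by rewrite mulr0.
rewrite Hs ?mulr0 // => p; apply/eqP => Hp.
have Hpb : p = b.
  by move/ffunP: Hp => /(_ b); rewrite set_occE eqxx onehotE => /esym /eqP.
apply: Hx; apply/ffunP => j; rewrite onehotE.
case: (j =P a) => [->|/eqP Hja]; first by rewrite Ha.
move/ffunP: Hp => /(_ j); rewrite !set_occE (negbTE Hja) onehotE Hpb.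
case: (j =P b) => [Hjb|_ //]; rewrite Hjb.
by move=> _; move: Hb; rewrite set_occE -Hjb (negbTE Hja).
Qed.


Lemma onehot_eq (a b : 'I_M) : (onehot a == onehot b) = (a == b).
Proof. by apply/eqP/eqP => [/onehot_inj|->]. Qed.

End Gen.

Section Ham.
Variable R : realType.
Variable N : nat.

Lemma supp_splus (phi : state R N.+1) k : supp phi -> supp (op_apply (sigma_plus R k) phi).
Proof.
move=> Hs n s Hn; rewrite apply_splus /=; case: ifP => // _.
by rewrite Hs ?mulr0.
Qed.

Lemma conj_real (a : R) : conjc (Complex a 0) = Complex a 0.
Proof. by apply/eqP; rewrite eq_complex /= oppr0 !eqxx. Qed.

Lemma H_eval (gamma J : 'I_N -> R) (psi : state R N.+1) x : supp psi ->
  op_apply (H_gammaJ gamma J) psi x =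
  \sum_m (Complex (J m) 0 *
            (if x.1 == onehot (site_r m) then
               (if x.2 (site_r m) then 2 * psi (onehot (site_l m), set_occ x.2 (site_r m) false) else 0)
             else 0)
          + Complex (J m) 0 *
            (if x.2 (site_r m) then 0 else
               2 * (if x.1 == onehot (site_l m) then psi (onehot (site_r m), set_occ x.2 (site_r m) true) else 0)))
  - \sum_m (Complex (gamma m) 0 * (if x.1 == onehot (site_r m) then psi (onehot (site_l m), x.2) else 0)
          + Complex (gamma m) 0 * (if x.1 == onehot (site_l m) then psi (onehot (site_r m), x.2) else 0)).
Proof.
move=> Hs; rewrite /H_gammaJ; cbv zeta.
rewrite apply_add apply_opp !apply_sum; congr (_ - _); apply: eq_bigr => m _.
  rewrite apply_add !adj_scale !adj_mul adj_cre adj_ann !apply_scale conj_real.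
  rewrite !apply_mul hop_eval; last exact: supp_splus.
  rewrite apply_adj_splus /= apply_mul hop_eval //.
  by case: ifP; rewrite ?apply_splus.
rewrite apply_add !adj_scale !adj_mul adj_cre adj_ann !apply_scale conj_real.
by rewrite !apply_mul !hop_eval.
Qed.


Lemma H_eval2 (gamma J : 'I_N -> R) (psi : state R N.+1) e s : supp psi ->
  op_apply (H_gammaJ gamma J) psi (onehot e, s) =
  \sum_m (if e == site_r m then
            Complex (J m) 0 * (if s (site_r m) then 2 * psi (onehot (site_l m), set_occ s (site_r m) false) else 0)
            - Complex (gamma m) 0 * psi (onehot (site_l m), s) else 0)
  + \sum_m (if e == site_l m then
            Complex (J m) 0 * (if s (site_r m) then 0 else 2 * psi (onehot (site_r m), set_occ s (site_r m) true))
            - Complex (gamma m) 0 * psi (onehot (site_r m), s) else 0).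
Proof.
move=> Hs; rewrite H_eval //= -sumrB -big_split /=; apply: eq_bigr => m _.
rewrite !onehot_eq.
case: (e == site_r m); case: (e == site_l m); case: (s (site_r m)); ring.
Qed.

Lemma H_eval_out (gamma J : 'I_N -> R) (psi : state R N.+1) x : supp psi ->
  (forall p, x.1 != onehot p) -> op_apply (H_gammaJ gamma J) psi x = 0.
Proof.
move=> Hs Hx; rewrite H_eval // !big1 ?subrr // => m _;
  rewrite (negbTE (Hx (site_r m))) (negbTE (Hx (site_l m))).
  all: by rewrite !mulr0 ?if_same ?mulr0 ?addr0.
Qed.

End Ham.

Section Constr.
Variable R : realType.
Variable N : nat.
Variables gamma J : 'I_N -> R.

Local Notation spins := {ffun 'I_N.+1 -> bool}.

Definition cg (i : nat) : R[i] := Complex (oapp gamma 1 (insub i)) 0.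
Definition cj (i : nat) : R[i] := Complex (oapp J 0 (insub i)) 0.
Definition site (i : nat) : 'I_N.+1 := inord i.

Definition Rstep (phi : spins -> R[i]) (k : nat) (t : spins) : R[i] :=
  cj k.*2 * (if t (site k.*2.+1) then 2 * phi (set_occ t (site k.*2.+1) false) else 0)
  - cg k.*2 * phi t.

Definition step (phi : spins -> R[i]) (k : nat) (s : spins) : R[i] :=
  (Rstep phi k s + (if s (site k.*2.+2) then 0 else
     2 * cj k.*2.+1 / cg k.*2.+1 * Rstep phi k (set_occ s (site k.*2.+2) true)))
  / cg k.*2.+1.

Fixpoint Phi (s0 : spins) (k : nat) : spins -> R[i] :=
  match k with
  | 0 => fun s => if s == s0 then 1 else 0
  | k'.+1 => step (Phi s0 k') k'
  end.

Definition psi (s0 : spins) : state R N.+1 := fun y =>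
  if [pick p | y.1 == onehot p] is Some p then
    (if odd p then 0 else Phi s0 p./2 y.2) else 0.

Lemma psi_onehot s0 p s :
  psi s0 (onehot p, s) = if odd p then 0 else Phi s0 p./2 s.
Proof.
rewrite /psi /=; case: pickP => [q /eqP /onehot_inj -> //|].
by move/(_ p); rewrite eqxx.
Qed.

Lemma psi_supp s0 : supp (psi s0).
Proof.
move=> n s Hn; rewrite /psi /=; case: pickP => [q Hq|//].
by move: (Hn q); rewrite Hq.
Qed.

Lemma step_ok (phi : spins -> R[i]) k s : cg k.*2.+1 != 0 ->
  Rstep phi k s + (cj k.*2.+1 * (if s (site k.*2.+2) then 0 else
     2 * step phi k (set_occ s (site k.*2.+2) true)) - cg k.*2.+1 * step phi k s) = 0.
Proof.
move=> Hg; rewrite /step set_occ_ss set_occE eqxx /=.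
case: (s (site k.*2.+2)); field => //.
Qed.


Lemma site_val i : (i <= N)%N -> nat_of_ord (site i) = i.
Proof. by move=> Hi; rewrite /site inordK. Qed.

Lemma site_valv i : (i <= N)%N -> \val (site i) = i.
Proof. exact: site_val. Qed.

Lemma set_occ_0 (t : spins) e b : e != ord0 -> set_occ t e b ord0 = t ord0.
Proof. by move=> He; rewrite set_occE eq_sym (negbTE He). Qed.

Lemma Phi_sector (s0 : spins) k (s : spins) : s0 ord0 -> (k.*2 <= N)%N -> ~~ s ord0 -> Phi s0 k s = 0.
Proof.
move=> H0; elim: k s => [|k IH] s Hk Hs /=.
  by case: eqP => // Es; move: Hs; rewrite Es H0.
have Hk' : (k.*2 <= N)%N by apply: leq_trans Hk; rewrite leq_double.
have He : site k.*2.+1 != ord0.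
  by rewrite -val_eqE /= site_val //; apply: leq_trans Hk; rewrite doubleS ltnW.
have Hf : site k.*2.+2 != ord0.
  by rewrite -val_eqE /= site_val // -doubleS.
have HR : forall t : spins, ~~ t ord0 -> Rstep (Phi s0 k) k t = 0.
  move=> t Ht; rewrite /Rstep !IH // ?set_occ_0 //.
  by case: ifP => _; rewrite !mulr0 subr0.
by rewrite /step !HR ?set_occ_0 // mulr0 if_same add0r mul0r.
Qed.

Lemma Phi_step (s0 : spins) k (m0 m1 : 'I_N) (s : spins) :
  (forall m, gamma m != 0) ->
  (m0 : nat) = k.*2 -> (m1 : nat) = k.*2.+1 ->
  Complex (J m0) 0 * (if s (site_r m0) then 2 * Phi s0 k (set_occ s (site_r m0) false) else 0)
    - Complex (gamma m0) 0 * Phi s0 k s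
  + (Complex (J m1) 0 * (if s (site_r m1) then 0 else 2 * Phi s0 k.+1 (set_occ s (site_r m1) true))
    - Complex (gamma m1) 0 * Phi s0 k.+1 s) = 0.
Proof.
move=> Hg H0 H1.
have Hr0 : site_r m0 = site k.*2.+1.
  apply: val_inj; rewrite [in LHS]/site_r [LHS]lift0 site_valv ?H0 //.
  by rewrite -H1; apply: ltnW.
have Hr1 : site_r m1 = site k.*2.+2.
  apply: val_inj; rewrite [in LHS]/site_r [LHS]lift0 site_valv ?H1 //.
  by rewrite -H1.
have HJ0 : Complex (J m0) 0 = cj k.*2 by rewrite /cj -H0 valK.
have HJ1 : Complex (J m1) 0 = cj k.*2.+1 by rewrite /cj -H1 valK.
have HG0 : Complex (gamma m0) 0 = cg k.*2 by rewrite /cg -H0 valK.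
have HG1 : Complex (gamma m1) 0 = cg k.*2.+1 by rewrite /cg -H1 valK.
rewrite Hr0 Hr1 HJ0 HJ1 HG0 HG1.
apply: step_ok; rewrite -HG1 eq_complex /= negb_and; apply/orP; left; exact: Hg.
Qed.


Lemma ord_nat_inj n (a b : 'I_n) : nat_of_ord a = nat_of_ord b -> a = b.
Proof. exact: val_inj. Qed.

Lemma vsr (m : 'I_N) : nat_of_ord (site_r m) = m.+1.
Proof. exact: lift0. Qed.

Lemma vsl (m : 'I_N) : nat_of_ord (site_l m) = m.
Proof. by []. Qed.

Lemma psi_zero (s0 : spins) x : (forall m, gamma m != 0) -> ~~ odd N ->
  op_apply (H_gammaJ gamma J) (psi s0) x = 0.
Proof.
move=> Hg HN; case: x => n s.
case: (pickP (fun p => n == onehot p)) => [e /eqP -> | Hn]; last first.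
  by apply: H_eval_out; [exact: psi_supp | move=> p /=; rewrite Hn].
rewrite H_eval2; last exact: psi_supp.
case He: (odd e).
- set k := e./2.
  have Hev : (e : nat) = k.*2.+1.
    rewrite /k odd_halfK // prednK // lt0n; apply/eqP => E; by rewrite E in He.
  have HlN : (k.*2.+1 < N)%N.
    rewrite -Hev ltn_neqAle -ltnS ltn_ord andbT; apply/eqP => E.
    by move: HN; rewrite -E He.
  have Hl0 : (k.*2 < N)%N by apply: ltnW.
  pose m0 : 'I_N := Ordinal Hl0.
  pose m1 : 'I_N := Ordinal HlN.
  have Er : forall m : 'I_N, (e == site_r m) = (m == m0).
    move=> m; apply/eqP/eqP => [H|->].
      have H' : nat_of_ord e = nat_of_ord (site_r m) by rewrite H.
      by apply: ord_nat_inj; move: H'; rewrite vsr Hev => -[].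
    by apply: ord_nat_inj; rewrite vsr Hev.
  have El : forall m : 'I_N, (e == site_l m) = (m == m1).
    move=> m; apply/eqP/eqP => [H|->].
      have H' : nat_of_ord e = nat_of_ord (site_l m) by rewrite H.
      by apply: ord_nat_inj; move: H'; rewrite vsl Hev.
    by apply: ord_nat_inj; rewrite vsl Hev.
  rewrite (bigD1 m0) ?Er ?eqxx //= big1 ?addr0; last first.
    by move=> m /negbTE Hm; rewrite Er Hm.
  rewrite (bigD1 m1) ?El ?eqxx //= big1 ?addr0; last first.
    by move=> m /negbTE Hm; rewrite El Hm.
  rewrite !psi_onehot.
  have -> : nat_of_ord (site_l m0) = k.*2 by [].
  have -> : nat_of_ord (site_r m1) = (k.+1).*2 by rewrite vsr.
  rewrite !odd_double !doubleK.
  exact: Phi_step.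
- rewrite !big1 ?addr0 // => m _.
    case: eqP => // Em; rewrite !psi_onehot.
    have -> : odd (site_r m) by rewrite vsr /= -vsl -Em He.
    by rewrite /= !mulr0 ?if_same ?mulr0 subr0.
  case: eqP => // Em; rewrite !psi_onehot.
  have -> : odd (site_l m).
    by move: He; rewrite Em vsr vsl /=; case: (odd m).
  by rewrite /= !mulr0 ?if_same ?mulr0 subr0.
Qed.


Lemma psi_sector (s0 : spins) : s0 ord0 -> in_sector (psi s0).
Proof.
move=> H0 [n s] /= Hx; rewrite /psi /=.
case: pickP => [p /eqP Hp|//].
have Hnf : num_fermions (n, s) = 1%N.
  rewrite /num_fermions /= Hp (eq_card (B := pred1 p)) ?card1 // => j.
  by rewrite !inE onehotE.
move: Hx; rewrite Hnf eqxx /= => Hs.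
case: ifP => // _; apply: Phi_sector => //.
rewrite halfK; apply: leq_trans (leq_subr _ _) _; rewrite -ltnS; exact: ltn_ord.
Qed.

Lemma cardF : #|{ffun 'I_N -> bool}| = (2 ^ N)%N.
Proof. by rewrite card_ffun card_bool card_ord. Qed.

Definition cfg (i : 'I_(2 ^ N)) : spins :=
  [ffun j => if unlift ord0 j is Some j' then
     (enum_val (cast_ord (esym cardF) i) : {ffun 'I_N -> bool}) j' else true].

Lemma cfg0 i : cfg i ord0.
Proof. by rewrite ffunE unlift_none. Qed.

Lemma cfg_inj : injective cfg.
Proof.
move=> i i' H.
have Hf : (enum_val (cast_ord (esym cardF) i) : {ffun 'I_N -> bool}) =
          enum_val (cast_ord (esym cardF) i').
  apply/ffunP => j; move/ffunP: H => /(_ (lift ord0 j)).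
  by rewrite !ffunE liftK.
by move/enum_val_inj/cast_ord_inj: Hf.
Qed.

Lemma lin_ind : lin_indep (fun i => psi (cfg i)).
Proof.
move=> a Ha i; have := Ha (onehot ord0, cfg i).
rewrite (bigD1 i) //= big1 ?addr0.
  by rewrite psi_onehot /= eqxx mulr1.
move=> j Hj; rewrite psi_onehot /=.
case: eqP => [/cfg_inj E|_]; last by rewrite mulr0.
by move: Hj; rewrite E eqxx.
Qed.

End Constr.

End Aux.
Import Aux.


Theorem mainTheorem2 (R : realType) (Z : nat) (hZ : (1 <= Z)%N)
  (gamma J : 'I_(2 * Z) -> R) (hgamma : forall m, gamma m != 0) :
  exists psi : 'I_(2 ^ (2 * Z)) -> state R (2 * Z).+1,
    lin_indep psi /\
    (forall k, in_sector (psi k)) /\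
    (forall k, op_apply (H_gammaJ gamma J) (psi k) = (fun _ => 0)).
Proof.
exists (fun k => Aux.psi gamma J (cfg k)); split; first exact: lin_ind.
split; first by move=> k; apply: psi_sector; exact: cfg0.
move=> k; apply: functional_extensionality => x.
by apply: psi_zero => //; rewrite mul2n odd_double.
Qed.
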